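(* Let $n\ge2$, let $k\in\mathbb{N}$ be the exponent of the largest power of $2$ dividing $n$, let $n_0=n/2^k$, and let $n_0=\sum_{i=1}^{\ell}2^{m_i}$ with $\ell\ge1$ and $m_1>\cdots>m_{\ell-1}>m_\ell=0$ be its binary expansion. (a) If $\ell=1$ (i.e. $n=2^k$), then $QB(n)=\{(n/2,n/2)\}$. (b) If $\ell>1$, then $QB(n)$ consists exactly of the following pairs, which are pairwise distinct: (b.1) the pair $\bigl(2^k(\sum_{i=1}^{\ell-1}2^{m_i-1}+1),\ 2^k\sum_{i=1}^{\ell-1}2^{m_i-1}\bigr)$; (b.2) for every $j\in\{2,\dots,\ell-1\}$ with $m_j>m_{j+1}+1$, the pair $\bigl(2^k(\sum_{i=1}^{j-1}2^{m_i-1}+2^{m_j}),\ n-2^k(\sum_{i=1}^{j-1}2^{m_i-1}+2^{m_j})\bigr)$; (b.3) for every $j\in\{2,\dots,\ell-1\}$ with $m_j<m_{j-1}-1$, the pair $\bigl(n-2^k\sum_{i=1}^{j-1}2^{m_i-1},\ 2^k\sum_{i=1}^{j-1}2^{m_i-1}\bigr)$; (b.4) if $k\ge1$, the pair $(n/2,n/2)$.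
   Context: Bifurcating trees: rooted trees in which every internal node has exactly two children; $\mathcal{T}_n$ is the set of isomorphism classes of bifurcating trees with $n$ leaves. The Colless index is $\mathcal{C}(T)=\sum_{v}|\kappa_T(v_1)-\kappa_T(v_2)|$, summed over internal nodes $v$ with children $v_1,v_2$, where $\kappa_T(w)$ is the number of leaves descending from $w$; $c_n=\min\{\mathcal{C}(T):T\in\mathcal{T}_n\}$. For $n\ge2$, $QB(n)=\{(n_a,n_b)\in\mathbb{N}^2: n_a\ge n_b\ge1,\ n_a+n_b=n,\ c_{n_a}+c_{n_b}+n_a-n_b=c_n\}$. *)

(* Defs.v *)
From mathcomp Require Import all_boot.
Set Implicit Arguments. Unset Strict Implicit. Unset Printing Implicit Defensive.

(* Isomorphism classes are not quotiented: the minimum Colless index over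
   all trees equals the minimum over isomorphism classes. *)
Inductive btree : Type := Leaf | Node of btree & btree.

Fixpoint leaves (T : btree) : nat :=
  match T with Leaf => 1 | Node l r => leaves l + leaves r end.

Definition absdiff (a b : nat) : nat := (a - b) + (b - a).

Fixpoint colless (T : btree) : nat :=
  match T with
  | Leaf => 0
  | Node l r => absdiff (leaves l) (leaves r) + colless l + colless r
  end.

Fixpoint all_trees (d : nat) : seq btree :=
  match d with
  | 0 => [:: Leaf]
  | d'.+1 => Leaf :: [seq Node l r | l <- all_trees d', r <- all_trees d']
  end.

(* A tree with n leaves has height < n, hence every tree with n leaves
   occurs in all_trees n.  c n = minimal Colless index over trees with
   n leaves (for n >= 1; value 0 for the empty case n = 0, never used). *)
Definition cmin (n : nat) : nat :=
  match [seq colless T | T <- all_trees n & leaves T == n] with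
  | [::] => 0
  | x :: s => foldr minn x s
  end.

Definition QB (n : nat) (p : nat * nat) : bool :=
  let: (na, nb) := p in
  [&& nb <= na, 1 <= nb, na + nb == n & cmin na + cmin nb + (na - nb) == cmin n].

Definition Spart (m : nat -> nat) (j : nat) : nat :=
  \sum_(1 <= i < j) 2 ^ (m i - 1).

Definition QB_list (n k l : nat) (m : nat -> nat) : seq (nat * nat) :=
  (2 ^ k * (Spart m l + 1), 2 ^ k * Spart m l)
  :: [seq (2 ^ k * (Spart m j + 2 ^ m j), n - 2 ^ k * (Spart m j + 2 ^ m j))
       | j <- iota 2 (l - 2) & m (j.+1) + 1 < m j]
  ++ [seq (n - 2 ^ k * Spart m j, 2 ^ k * Spart m j)
       | j <- iota 2 (l - 2) & m j < m (j.-1) - 1]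
  ++ (if 1 <= k then [:: (n %/ 2, n %/ 2)] else [::]).

(* Main.v *)
Require Import Defs.
From HB Require Import structures.
From mathcomp Require Import all_boot.
From mathcomp Require Import zify.


Fixpoint bt_eq (t1 t2 : btree) : bool :=
  match t1, t2 with
  | Leaf, Leaf => true
  | Node a b, Node c d => bt_eq a c && bt_eq b d
  | _, _ => false
  end.

Lemma bt_eqP : Equality.axiom bt_eq.
Proof.
elim=> [|a IHa b IHb] [|c d] /=; try by constructor.
case: (IHa c) => [->|H]; last by constructor; case.
case: (IHb d) => [->|H]; last by constructor; case.
by constructor.
Qed.

HB.instance Definition _ := hasDecEq.Build btree bt_eqP.

Fixpoint height (T : btree) : nat :=
  match T with Leaf => 0 | Node l r => (maxn (height l) (height r)).+1 end.

Lemma leaves_pos T : 0 < leaves T.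
Proof. elim: T => //= l Hl r Hr; lia. Qed.

Lemma height_lt T : height T < leaves T.
Proof. elim: T => //= l Hl r Hr. have := leaves_pos l; have := leaves_pos r. lia. Qed.

Lemma in_all_trees d T : height T <= d -> T \in all_trees d.
Proof.
elim: d T => [|d IH] [|l r] //=.
move=> H; rewrite in_cons; apply/orP; right.
apply/allpairsP; exists (l, r) => /=; split => //; apply: IH; lia.
Qed.

Lemma foldr_minn_le x s y : y \in x :: s -> foldr minn x s <= y.
Proof.
elim: s x y => [|z s IH] x y /=; first by rewrite inE => /eqP ->.
rewrite !inE => /orP [/eqP ->|/orP [/eqP ->|H]].
- have := IH x x; rewrite inE eqxx /= => /(_ isT); lia.
- lia.
- have := IH x y; rewrite inE H orbT => /(_ isT); lia.
Qed.

Lemma foldr_minn_in x s : foldr minn x s \in x :: s.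
Proof.
elim: s => [|z s IH] /=; first by rewrite inE.
case: (leqP z (foldr minn x s)) => H.
- by rewrite !inE eqxx orbT.
- move: IH; rewrite !inE => /orP [->|->] //; by rewrite !orbT.
Qed.

Lemma cmin_le T : cmin (leaves T) <= colless T.
Proof.
rewrite /cmin.
have Hin : colless T \in [seq colless T0 | T0 <- all_trees (leaves T) & leaves T0 == leaves T].
  apply/mapP; exists T => //; rewrite mem_filter eqxx /=.
  apply: in_all_trees; exact: ltnW (height_lt T).
case: [seq _ | _ <- _ & _] Hin => [//|x s] H.
exact: foldr_minn_le.
Qed.

Fixpoint cat_tree (n : nat) : btree :=
  match n with 0 => Leaf | n'.+1 => Node Leaf (cat_tree n') end.

Lemma cat_leaves n : leaves (cat_tree n) = n.+1.
Proof. elim: n => //= n ->; lia. Qed.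

Lemma cmin_ex n : 0 < n -> exists T, leaves T = n /\ colless T = cmin n.
Proof.
move=> Hn; rewrite /cmin.
have Hin : colless (cat_tree n.-1) \in [seq colless T0 | T0 <- all_trees n & leaves T0 == n].
  apply/mapP; exists (cat_tree n.-1) => //; rewrite mem_filter cat_leaves prednK // eqxx /=.
  apply: in_all_trees; have := height_lt (cat_tree n.-1); rewrite cat_leaves; lia.
case E: [seq _ | _ <- _ & _] Hin => [//|x s] _.
have : foldr minn x s \in [seq colless T0 | T0 <- all_trees n & leaves T0 == n].
  by rewrite E; exact: foldr_minn_in.
case/mapP => T; rewrite mem_filter => /andP [/eqP HT _] ->.
by exists T.
Qed.

Lemma cmin0 : cmin 0 = 0.
Proof.
rewrite /cmin.
suff -> : [seq T <- all_trees 0 | leaves T == 0] = [::] by [].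
by [].
Qed.


Fixpoint ccf (f n : nat) : nat :=
  match f with
  | 0 => 0
  | f'.+1 => if n <= 1 then 0 else
             if n %% 2 == 1 then ccf f' (n %/ 2) + ccf f' (n %/ 2).+1 + 1
             else 2 * ccf f' (n %/ 2)
  end.

Definition cc n := ccf n n.

Lemma ccf_fuel f g n : n <= f -> n <= g -> ccf f n = ccf g n.
Proof.
elim: f g n => [|f IH] g n Hf Hg.
- have -> : n = 0 by lia. by case: g {Hg}.
- case: g Hg => [|g] Hg.
  + have -> : n = 0 by lia. by [].
  + rewrite /=. case: ifP => // H1.
    case: ifP => H2.
    * rewrite (IH g (n %/ 2)); try lia. rewrite (IH g (n %/ 2).+1) //; lia.
    * rewrite (IH g (n %/ 2)) //; lia.
Qed.

Lemma cc0 : cc 0 = 0. Proof. by []. Qed.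
Lemma cc1 : cc 1 = 0. Proof. by []. Qed.

Lemma cc_even t : 0 < t -> cc (2 * t) = 2 * cc t.
Proof.
move=> Ht; rewrite /cc.
have -> : 2 * t = (2 * t - 1).+1 by lia.
rewrite /=.
have -> : (2 * t - 1).+1 <= 1 = false by lia.
have -> : ((2 * t - 1).+1 %% 2 == 1) = false by lia.
have -> : (2 * t - 1).+1 %/ 2 = t by lia.
rewrite (ccf_fuel (2 * t - 1) (t)) //; lia.
Qed.

Lemma cc_odd t : 0 < t -> cc (2 * t + 1) = cc t + cc t.+1 + 1.
Proof.
move=> Ht; rewrite /cc.
have -> : 2 * t + 1 = (2 * t).+1 by lia.
rewrite /=.
have -> : (2 * t).+1 <= 1 = false by lia.
have -> : ((2 * t).+1 %% 2 == 1) = true by lia.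
have -> : (2 * t).+1 %/ 2 = t by lia.
rewrite (ccf_fuel (2 * t) (t)); try lia.
rewrite (ccf_fuel (2 * t) (t.+1)) //; lia.
Qed.

Lemma half_cases a : exists a', a = 2 * a' \/ a = 2 * a' + 1.
Proof. exists (a %/ 2); lia. Qed.

Lemma cc_eq x y : x = y -> cc x = cc y.
Proof. by move=> ->. Qed.

Lemma cc_nn_aux N : forall a b, a + b <= N -> 0 < a -> 0 < b ->
  cc (a + b) <= cc a + cc b + absdiff a b.
Proof.
rewrite /absdiff.
elim: N => [|N IH]; first by move=> a b; lia.
have key : forall a b, a + b <= N.+1 -> 0 < a -> 0 < b -> (exists a', a = 2 * a') \/ (exists a' b', a = 2 * a' + 1 /\ b = 2 * b' + 1) ->
    cc (a + b) <= cc a + cc b + ((a - b) + (b - a)).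
  move=> a b HN Ha Hb [[a' Ea]|[a' [b' [Ea Eb]]]].
  - case: (half_cases b) => b' [Eb|Eb]; subst a b.
    + have E1 : cc (2*a' + 2*b') = 2 * cc (a'+b') by rewrite -cc_even; [apply cc_eq; lia | lia].
      have E2 : cc (2*a') = 2 * cc a' by apply cc_even; lia.
      have E3 : cc (2*b') = 2 * cc b' by apply cc_even; lia.
      have := IH a' b'. lia.
    + have E1 : cc (2*a' + (2*b'+1)) = cc (a'+b') + cc (a'+b').+1 + 1 by rewrite -cc_odd; [apply cc_eq; lia | lia].
      have E2 : cc (2*a') = 2 * cc a' by apply cc_even; lia.
      case: (posnP b') => Hb'.
      * subst b'. have H := IH a' 1.
        have E4 : cc (a' + 1) = cc (a' + 0).+1 by apply cc_eq; lia.
        have E5 : cc a' = cc (a' + 0) by apply cc_eq; lia.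
        have C1 : cc 1 = 0 := cc1. have C2 : cc (2*0+1) = 0 by []. lia.
      * have E3 : cc (2*b'+1) = cc b' + cc b'.+1 + 1 by apply cc_odd; lia.
        have H1 := IH a' b'. have H2 := IH a' b'.+1.
        have E4 : cc (a' + b'.+1) = cc (a' + b').+1 by apply cc_eq; lia.
        lia.
  - subst a b.
    have E1 : cc (2*a'+1 + (2*b'+1)) = 2 * cc (a'+b'+1) by rewrite -cc_even; [apply cc_eq; lia | lia].
    case: (posnP a') => Ha'; case: (posnP b') => Hb'.
    + subst. by [].
    + subst a'. have E3 : cc (2*b'+1) = cc b' + cc b'.+1 + 1 by apply cc_odd; lia.
      have H := IH b' 1.
      have E4 : cc (b' + 1) = cc (0 + b' + 1) by apply cc_eq; lia.
      have E5 : cc b'.+1 = cc (b' + 1) by apply cc_eq; lia.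
      have C1 : cc 1 = 0 := cc1. have C2 : cc (2*0+1) = 0 by []. lia.
    + subst b'. have E3 : cc (2*a'+1) = cc a' + cc a'.+1 + 1 by apply cc_odd; lia.
      have H := IH a' 1.
      have E4 : cc (a' + 1) = cc (a' + 0 + 1) by apply cc_eq; lia.
      have E5 : cc a'.+1 = cc (a' + 1) by apply cc_eq; lia.
      have C1 : cc 1 = 0 := cc1. have C2 : cc (2*0+1) = 0 by []. lia.
    + have E3 : cc (2*a'+1) = cc a' + cc a'.+1 + 1 by apply cc_odd; lia. have E4 : cc (2*b'+1) = cc b' + cc b'.+1 + 1 by apply cc_odd; lia.
      have H1 := IH a'.+1 b'. have H2 := IH a' b'.+1.
      have E5 : cc (a'.+1 + b') = cc (a' + b' + 1) by apply cc_eq; lia.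
      have E6 : cc (a' + b'.+1) = cc (a' + b' + 1) by apply cc_eq; lia.
      lia.
move=> a b HN Ha Hb.
case: (half_cases a) => a' [Ea|Ea].
- apply: key => //; left; by exists a'.
- case: (half_cases b) => b' [Eb|Eb].
  + rewrite addnC (addnC (cc a)) (addnC (a - b)). apply: key; try lia. left; by exists b'.
  + apply: key => //; right; by exists a', b'.
Qed.

Lemma cc_nn a b : 0 < a -> 0 < b -> cc (a + b) <= cc a + cc b + absdiff a b.
Proof. by move=> Ha Hb; apply: (cc_nn_aux (a + b)). Qed.


Lemma cmin_cc n : cmin n = cc n.
Proof.
elim: n {-2}n (leqnn n) => [|N IH] n Hn.
  have -> : n = 0 by lia. by rewrite cmin0.
case: (ltnP n 2) => Hn2.
  case: (posnP n) => Hn0; first by subst; rewrite cmin0.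
  have -> : n = 1 by lia.
  have := cmin_le Leaf; rewrite /= cc1; lia.
apply/eqP; rewrite eqn_leq; apply/andP; split.
- (* upper bound via balanced split *)
  case: (half_cases n) => t [Et|Et].
  + have Ht : 0 < t by lia.
    have [Ta [HTa CTa]] := cmin_ex t Ht.
    have H := cmin_le (Node Ta Ta). simpl in H.
    rewrite HTa CTa (IH t) in H; last lia.
    have E : t + t = n by lia. rewrite E in H.
    move: H; rewrite Et cc_even // /absdiff; lia.
  + have Ht : 0 < t by lia.
    have Ht1 : 0 < t.+1 by lia.
    have [Ta [HTa CTa]] := cmin_ex t.+1 Ht1.
    have [Tb [HTb CTb]] := cmin_ex t Ht.
    have H := cmin_le (Node Ta Tb). simpl in H.
    rewrite HTa HTb CTa CTb (IH t) ?(IH t.+1) in H; try lia.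
    have E : t.+1 + t = n by lia. rewrite E in H.
    move: H; rewrite Et cc_odd // /absdiff; lia.
- have [T [HT CT]] := cmin_ex n (ltnW Hn2).
  case: T HT CT => [/= HT|l r /= HT CT]; first lia.
  have Hl := leaves_pos l; have Hr := leaves_pos r.
  have H1 := cmin_le l; have H2 := cmin_le r.
  rewrite (IH (leaves l)) in H1; last lia.
  rewrite (IH (leaves r)) in H2; last lia.
  have := cc_nn (leaves l) (leaves r) Hl Hr; rewrite HT -CT; lia.
Qed.

Definition Q x y := cc x + cc y + absdiff x y = cc (x + y).

Lemma Qsym x y : Q x y <-> Q y x.
Proof. rewrite /Q /absdiff (addnC y x); lia. Qed.

Lemma Q_refl a : 0 < a -> Q a a.
Proof. move=> Ha; rewrite /Q /absdiff. have -> : a + a = 2 * a by lia. rewrite cc_even //; lia. Qed.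

Lemma Q_succ a : 0 < a -> Q a a.+1.
Proof. move=> Ha; rewrite /Q /absdiff. have -> : a + a.+1 = 2 * a + 1 by lia. rewrite cc_odd //; lia. Qed.

Lemma QE a b : 0 < a -> 0 < b -> Q (2 * a) (2 * b) <-> Q a b.
Proof.
move=> Ha Hb; rewrite /Q /absdiff.
have -> : 2 * a + 2 * b = 2 * (a + b) by lia.
rewrite !cc_even; lia.
Qed.

Lemma QEO x z : 0 < x -> 0 < z -> Q (2 * x) (2 * z + 1) <-> Q x z /\ Q x z.+1.
Proof.
move=> Hx Hz; rewrite /Q.
have H1 := cc_nn x z Hx Hz. have H2 := cc_nn x z.+1 Hx (ltn0Sn z).
have -> : 2 * x + (2 * z + 1) = 2 * (x + z) + 1 by lia.
rewrite cc_even // cc_odd ?cc_odd //; last lia.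
have -> : (x + z).+1 = x + z.+1 by lia.
move: H1 H2; rewrite /absdiff; lia.
Qed.

Lemma Q2x1 x : Q (2 * x) 1 -> x = 1.
Proof.
rewrite /Q /absdiff cc1.
case: (posnP x) => Hx; first by subst.
rewrite cc_even // cc_odd //.
have := cc_nn x 1 Hx (ltn0Sn 0); rewrite cc1 /absdiff.
have -> : x + 1 = x.+1 by lia. lia.
Qed.

Lemma QOO x z : Q (2 * x + 1) (2 * z + 1) -> x = z.
Proof.
wlog Hxz : x z / z <= x.
  move=> W H; case: (leqP z x) => H'; first exact: W.
  by symmetry; apply: W; [lia | apply/Qsym].
move=> H; case: (posnP z) => Hz.
- subst z. case: (posnP x) => Hx //.
  move: H; rewrite /Q /absdiff.
  have -> : 2 * 0 + 1 = 1 by []. rewrite cc1.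
  have -> : 2 * x + 1 + 1 = 2 * x.+1 by lia.
  rewrite cc_even // cc_odd //.
  have := cc_nn x 1 Hx (ltn0Sn 0); rewrite cc1 /absdiff.
  have -> : x + 1 = x.+1 by lia. lia.
- have Hx : 0 < x by lia.
  move: H; rewrite /Q /absdiff.
  have -> : 2 * x + 1 + (2 * z + 1) = 2 * (x + z).+1 by lia.
  rewrite cc_even // !cc_odd //.
  have H1 := cc_nn x.+1 z (ltn0Sn x) Hz. have H2 := cc_nn x z.+1 Hx (ltn0Sn z).
  have -> : (x + z).+1 = x.+1 + z by lia.
  have E : cc (x.+1 + z) = cc (x + z.+1) by apply cc_eq; lia.
  move: H1 H2; rewrite /absdiff; lia.
Qed.

Lemma Qplus2 u : 0 < u -> Q u (u + 2) <-> u %% 2 = 0.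
Proof.
move=> Hu; case: (half_cases u) => v [Ev|Ev]; subst u.
- have -> : 2 * v + 2 = 2 * v.+1 by lia.
  rewrite QE; try lia. split => _; [lia|apply: Q_succ; lia].
- have -> : 2 * v + 1 + 2 = 2 * v.+1 + 1 by lia.
  split; [move/QOO; lia | lia].
Qed.

Lemma Qscale j x y : 0 < x -> 0 < y -> Q (2 ^ j * x) (2 ^ j * y) <-> Q x y.
Proof.
move=> Hx Hy; elim: j => [|j IH]; first by rewrite !mul1n.
rewrite expnS -!mulnA QE //; rewrite muln_gt0 expn_gt0 //= ?Hx ?Hy.
Qed.


Definition specA (M u r y : nat) :=
  0 < u /\ ((y = 0 /\ u %% 2 = 0) \/ (y = r - M /\ 2 * (r - M) < M)).

Lemma lemA m : forall u r y, 2 ^ m.+1 <= r <= 2 ^ m.+2 -> y < 2 ^ m -> (0 < u \/ 0 < y) ->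
  (Q (2 ^ m.+1 * u + y) (2 ^ m.+1 * u + (r - y)) <-> specA (2 ^ m.+1) u r y).
Proof.
rewrite /specA.
elim: m => [|m IH] u r y.
- rewrite expn0 expn1 => Hr Hy Hu.
  have Ey : y = 0 by lia. subst y.
  have Hu' : 0 < u by lia.
  have -> : 2 * u + 0 = 2 * u by lia.
  have [E|[E|E]] : r = 2 \/ r = 3 \/ r = 4 by move: Hr; rewrite !expnS expn0; lia.
  + subst r. have -> : 2 * u + (2 - 0) = 2 * u.+1 by lia.
    rewrite QE //. split => _; [lia | exact: Q_succ].
  + subst r. have -> : 2 * u + (3 - 0) = 2 * u.+1 + 1 by lia.
    rewrite QEO //. have -> : u.+2 = u + 2 by lia. rewrite Qplus2 //.
    split; [case => _ H; lia| move=> H; split; [exact: Q_succ|lia]].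
  + subst r. have -> : 2 * u + (4 - 0) = 2 * (u + 2) by lia.
    rewrite QE // ?Qplus2 //; [lia | lia].
- move=> Hr Hy Hu.
  set P := 2 ^ m.
  have HP : 0 < P by rewrite expn_gt0.
  have E1 : 2 ^ m.+1 = 2 * P by rewrite expnS.
  have E2 : 2 ^ m.+2 = 4 * P by rewrite !expnS; lia.
  have E3 : 2 ^ m.+3 = 8 * P by rewrite !expnS; lia.
  have [su Esu] : exists su, su = P * u by eexists.
  have Hsu : 0 < su <-> 0 < u by rewrite Esu; nia.
  have IH' : forall r y, 2 * P <= r <= 4 * P -> y < P -> (0 < u \/ 0 < y) ->
     (Q (2 * su + y) (2 * su + (r - y)) <->
      0 < u /\ ((y = 0 /\ u %% 2 = 0) \/ (y = r - 2 * P /\ 2 * (r - 2 * P) < 2 * P))).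
    move=> r' y' Hr' Hy' Hu'.
    have := IH u r' y'; rewrite E1 E2 -/P.
    have -> : 2 * P * u = 2 * su by rewrite Esu; lia.
    by move=> /(_ Hr' Hy' Hu').
  rewrite E2. rewrite E2 E3 in Hr. rewrite E1 in Hy.
  have -> : 4 * P * u = 2 * (2 * su) by rewrite Esu; lia.
  case: (half_cases r) => r1 [Er|Er]; case: (half_cases y) => y1 [Ey|Ey]; subst r y.
  +
    have -> : 2 * (2 * su) + 2 * y1 = 2 * (2 * su + y1) by lia.
    have -> : 2 * (2 * su) + (2 * r1 - 2 * y1) = 2 * (2 * su + (r1 - y1)) by lia.
    rewrite QE; try lia.
    rewrite IH'; try lia.
  +
    have -> : 2 * (2 * su) + (2 * y1 + 1) = 2 * (2 * su + y1) + 1 by lia.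
    have -> : 2 * (2 * su) + (2 * r1 - (2 * y1 + 1)) = 2 * (2 * su + (r1 - y1 - 1)) + 1 by lia.
    split; [move/QOO; lia | lia].
  +
    have -> : 2 * (2 * su) + 2 * y1 = 2 * (2 * su + y1) by lia.
    have -> : 2 * (2 * su) + (2 * r1 + 1 - 2 * y1) = 2 * (2 * su + (r1 - y1)) + 1 by lia.
    rewrite QEO; try lia.
    have -> : (2 * su + (r1 - y1)).+1 = 2 * su + (r1.+1 - y1) by lia.
    rewrite (IH' r1 y1); try lia.
    rewrite (IH' r1.+1 y1); try lia.
  +
    have -> : 2 * (2 * su) + (2 * y1 + 1) = 2 * (2 * su + y1) + 1 by lia.
    have -> : 2 * (2 * su) + (2 * r1 + 1 - (2 * y1 + 1)) = 2 * (2 * su + (r1 - y1)) by lia.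
    rewrite Qsym.
    case: (posnP (2 * su + y1)) => Hz.
    * rewrite Hz /=. split; [move/Q2x1; lia | lia].
    * rewrite QEO; try lia.
      rewrite (Qsym _ (2 * su + y1)) (Qsym _ (2 * su + y1).+1).
      have -> : (2 * su + y1).+1 = 2 * su + y1.+1 by lia.
      have -> : 2 * su + (r1 - y1) = 2 * su + (r1.+1 - y1.+1) by lia.
      rewrite (IH' r1 y1); try lia.
      case: (ltnP y1.+1 P) => Hy1.
      -- rewrite (IH' r1.+1 y1.+1); try lia.
      -- have Ey1 : y1.+1 = P by lia.
         split.
         ++ move=> [[Hu0 [[Hy0 Hev]|[Hy2 Hlt]]] HQ2]; last lia.
            have HP1 : P = 1 by lia.
            have [Er1|Er1] : r1 = 2 \/ r1 = 3 by lia.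
            ** lia.
            ** exfalso. move: HQ2. subst r1.
               have -> : 2 * su + y1.+1 = 2 * su + 1 by lia.
               have -> : 2 * su + (3 .+1 - y1.+1) = 2 * (su + 1) + 1 by lia.
               move/QOO; lia.
         ++ move=> [Hu0 [[Hy0 _]|[Hy2 Hlt]]]; first lia.
            split; first lia.
            have -> : 2 * su + y1.+1 = 2 ^ m * (2 * u + 1) by rewrite -/P; nia.
            have -> : 2 * su + (r1.+1 - y1.+1) = 2 ^ m * (2 * u + 2) by rewrite -/P; nia.
            rewrite Qscale; try lia.
            have -> : 2 * u + 2 = (2 * u + 1).+1 by lia.
            apply: Q_succ; lia.
Qed.


Definition hypM (l : nat) (m : nat -> nat) :=
  (forall i j, 1 <= i -> i < j -> j <= l -> m j < m i) /\ m l = 0.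

Definition Rs (l : nat) (m : nat -> nat) (j : nat) := \sum_(j <= i < l.+1) 2 ^ m i.

Lemma m_pos l m : hypM l m -> forall i, 1 <= i < l -> 0 < m i.
Proof. move=> [Hm Hl] i /andP [H1 H2]; have := Hm i l H1 H2 (leqnn l); lia. Qed.

Lemma Sp1 m : Spart m 1 = 0.
Proof. by rewrite /Spart big_geq. Qed.

Lemma SpS m j : 1 <= j -> Spart m j.+1 = Spart m j + 2 ^ (m j - 1).
Proof. move=> Hj; by rewrite /Spart big_nat_recr. Qed.

Lemma Sp_mono m j j' : 1 <= j -> j <= j' -> Spart m j + (j' - j) <= Spart m j'.
Proof.
move=> Hj; elim: j' => [|j' IH] H; first lia.
case: (ltnP j j'.+1) => H'.
- have Hjj : j <= j' by lia.
  have := IH Hjj; rewrite SpS; last lia.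
  have := expn_gt0 2 (m j' - 1); lia.
- have -> : j = j'.+1 by lia. lia.
Qed.

Lemma RsS l m j : j <= l -> Rs l m j = 2 ^ m j + Rs l m j.+1.
Proof. move=> Hj; by rewrite /Rs big_ltn // ltnS. Qed.

Lemma Rs_end l m : Rs l m l.+1 = 0.
Proof. by rewrite /Rs big_geq. Qed.

Lemma Rs_bounds l m : hypM l m -> forall j, 1 <= j <= l ->
  2 ^ m j <= Rs l m j < 2 ^ (m j).+1.
Proof.
move=> H; have [Hm Hl] := H.
move=> j; move Hd: (l - j) => d; elim: d j Hd => [|d IH] j Hd Hj.
- have Ej : j = l by lia. subst j.
  rewrite RsS // Rs_end Hl; lia.
- rewrite RsS; last lia.
  have := IH j.+1 ltac:(lia) ltac:(lia).
  have Hmj : m j.+1 < m j by apply: Hm; lia.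
  have : 2 ^ (m j.+1).+1 <= 2 ^ m j by rewrite leq_exp2l.
  have E : 2 ^ (m j).+1 = 2 * 2 ^ m j := expnS _ _. lia.
Qed.

Lemma n0_split l m n0 : hypM l m -> n0 = \sum_(1 <= i < l.+1) 2 ^ m i ->
  forall j, 1 <= j <= l -> n0 = 2 * Spart m j + Rs l m j.
Proof.
move=> H Hn0 j Hj; rewrite Hn0 /Rs /Spart (@big_cat_nat _ _ _ j) /=; try lia.
rewrite big_distrr /=. congr (_ + _).
rewrite big_nat_cond [in RHS]big_nat_cond; apply: eq_bigr => i /andP [/andP [H1 H2] _].
have Hp : 0 < m i by apply: (m_pos l m H); lia.
by rewrite -expnS subn1 prednK.
Qed.

Lemma Sp_dvd l m : hypM l m -> forall j, j <= l -> 2 ^ m j %| Spart m j.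
Proof.
move=> [Hm _] j Hj; rewrite /Spart big_nat_cond; apply: dvdn_sum => i /andP [/andP [H1 H2] _].
rewrite dvdn_exp2l //. have := Hm i j H1 H2 Hj. lia.
Qed.

Lemma Sp_u l m : hypM l m -> forall j, 2 <= j <= l ->
  exists u, Spart m j = 2 ^ m j * u /\ 0 < u /\ (u %% 2 = 0 <-> m j < m j.-1 - 1).
Proof.
move=> H j Hj; have [Hm _] := H.
have Hj1 : j.-1 <= l by lia.
have /dvdnP [v Ev] := Sp_dvd l m H _ Hj1.
have Hlt : m j < m j.-1 by apply: Hm; lia.
have ESp : Spart m j = Spart m j.-1 + 2 ^ (m j.-1 - 1).
  have {1}-> : j = (j.-1).+1 by lia. rewrite SpS //; lia.
set e := m j.-1 - 1 - m j.
have Em : m j.-1 = m j + e + 1 by rewrite /e; lia.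
exists (2 ^ e * (2 * v + 1)); split; [|split].
- rewrite ESp Ev Em.
  have -> : m j + e + 1 - 1 = m j + e by lia.
  rewrite !expnD expn1. nia.
- by rewrite muln_gt0 expn_gt0 /= addn1.
- case: e Em => [|e] Em.
  + rewrite expn0 mul1n; lia.
  + rewrite expnS. lia.
Qed.


Definition lvl2 l m n0 i a b : Prop :=
  2 <= i /\ i <= l - 1 /\ m i.+1 + 1 < m i /\ a = Spart m i + 2 ^ m i /\ b = n0 - (Spart m i + 2 ^ m i).
Definition lvl3 l m n0 i a b : Prop :=
  2 <= i /\ i <= l - 1 /\ m i < m i.-1 - 1 /\ a = n0 - Spart m i /\ b = Spart m i.

Definition PartIn l m n0 j a b : Prop :=
  (a = Spart m l + 1 /\ b = Spart m l) \/
  (exists i, j <= i /\ lvl2 l m n0 i a b) \/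
  (exists i, j <= i /\ lvl3 l m n0 i a b).

Lemma PartIn_step l m n0 j a b :
  PartIn l m n0 j a b <-> PartIn l m n0 j.+1 a b \/ lvl2 l m n0 j a b \/ lvl3 l m n0 j a b.
Proof.
rewrite /PartIn; split.
- case=> [H|[[i [Hi H]]|[i [Hi H]]]]; first by left; left.
  + case: (ltnP j i) => Hji; first by left; right; left; exists i.
    have Ei : i = j by lia. subst i. by right; left.
  + case: (ltnP j i) => Hji; first by left; right; right; exists i.
    have Ei : i = j by lia. subst i. by right; right.
- case=> [[H|[[i [Hi H]]|[i [Hi H]]]]|[H|H]].
  + by left.
  + right; left; exists i; split => //; lia.
  + right; right; exists i; split => //; lia.
  + right; left; exists j; split => //.
  + right; right; exists j; split => //.
Qed.

Lemma PartIn_ge l m n0 : hypM l m -> 2 <= l -> n0 = \sum_(1 <= i < l.+1) 2 ^ m i ->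
  forall j a b, 1 <= j <= l -> PartIn l m n0 j a b -> Spart m j <= b.
Proof.
move=> H Hl Hn0 j a b Hj.
case=> [[_ ->]|[[i [Hi [H2 [H3 [H4 [H5 ->]]]]]]|[i [Hi [H2 [H3 [H4 [H5 ->]]]]]]]].
- have := Sp_mono m j l; lia.
- have E1 := n0_split l m n0 H Hn0 i ltac:(lia).
  have E2 := RsS l m i ltac:(lia).
  have := Sp_mono m j i; lia.
- have := Sp_mono m j i; lia.
Qed.

Lemma claim l m n0 : hypM l m -> 2 <= l -> n0 = \sum_(1 <= i < l.+1) 2 ^ m i ->
  forall d j, l - j = d -> 1 <= j <= l -> forall y, 2 * y <= Rs l m j -> (j = 1 -> 0 < y) ->
  (Q (Spart m j + (Rs l m j - y)) (Spart m j + y) <->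
   PartIn l m n0 j (Spart m j + (Rs l m j - y)) (Spart m j + y)).
Proof.
move=> H Hl Hn0; have [Hm Hml] := H.
elim=> [|d IH] j Hd Hj y Hy Hy1.
- have Ej : j = l by lia. subst j.
  have ER : Rs l m l = 1 by rewrite RsS // Rs_end Hml.
  rewrite ER in Hy *. have Ey : y = 0 by lia. subst y.
  have HSp : 1 <= Spart m l by have := Sp_mono m 1 l; rewrite Sp1; lia.
  split => _; last first.
  + have -> : Spart m l + (1 - 0) = (Spart m l + 0).+1 by lia.
    rewrite Qsym; apply: Q_succ; lia.
  + left; lia.
- have Hjl : j < l by lia.
  have Hmj := m_pos l m H j ltac:(lia).
  have Hmj1 : m j.+1 < m j by apply: Hm; lia.
  have Enj := n0_split l m n0 H Hn0 j ltac:(lia).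
  have Enj1 := n0_split l m n0 H Hn0 j.+1 ltac:(lia).
  have ER := RsS l m j ltac:(lia).
  have ESp := SpS m j ltac:(lia).
  have /andP [Rb1 Rb2] : 2 ^ m j.+1 <= Rs l m j.+1 < 2 ^ (m j.+1).+1 by apply: (Rs_bounds l m H); lia.
  move: Hmj Hmj1 ESp ER; case Emj: (m j) => [//|M] Hmj Hmj1 ESp ER.
  have E1 : M.+1 - 1 = M by lia. rewrite E1 in ESp.
  have EM : 2 ^ M.+1 = 2 * 2 ^ M := expnS _ _.
  have HMp : 0 < 2 ^ M by rewrite expn_gt0.
  have Hc2 : m j.+1 + 1 < M.+1 -> Rs l m j.+1 < 2 ^ M.
    move=> Hc; have : 2 ^ (m j.+1).+1 <= 2 ^ M by rewrite leq_exp2l; lia. lia.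
  have Hc2' : Rs l m j.+1 < 2 ^ M -> m j.+1 + 1 < M.+1.
    move=> Hc; have : 2 ^ m j.+1 < 2 ^ M by lia. rewrite ltn_exp2l; lia.
  have Hge := PartIn_ge l m n0 H Hl Hn0 j.+1.
  rewrite PartIn_step /lvl2 /lvl3 Emj.
  case: (leqP (2 ^ M) y) => HyM.
  +
    have -> : Spart m j + (Rs l m j - y) = Spart m j.+1 + (Rs l m j.+1 - (y - 2 ^ M)) by lia.
    have -> : Spart m j + y = Spart m j.+1 + (y - 2 ^ M) by lia.
    rewrite (IH j.+1); try lia.
    split; first by left.
    case=> [//|[[H1 [H2 [H3 [H4 H5]]]]|[H1 [H2 [H3 [H4 H5]]]]]].
    * have := Hc2 H3. lia.
    * lia.
  +
    have HPj : ~ PartIn l m n0 j.+1 (Spart m j + (Rs l m j - y)) (Spart m j + y).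
      move=> HP; have := Hge _ _ ltac:(lia) HP; lia.
    have [u [Eu [Hu0 Hu2]]] : exists u, Spart m j = 2 ^ M.+1 * u /\ (j = 1 -> u = 0) /\
        (2 <= j -> 0 < u /\ (u %% 2 = 0 <-> M.+1 < m j.-1 - 1)).
      case: (ltnP j 2) => Hj2.
      * exists 0; have -> : j = 1 by lia. by rewrite Sp1 muln0.
      * have [u [Eu [Hu Hu2]]] := Sp_u l m H j ltac:(lia).
        exists u; rewrite -Emj; split => //; split => //; lia.
    have HA := lemA M u (Rs l m j) y.
    rewrite -Eu /specA in HA.
    have S1 : 2 ^ M.+1 <= Rs l m j <= 2 ^ M.+2.
      have EM2 : 2 ^ M.+2 = 2 * 2 ^ M.+1 := expnS _ _.
      have : 2 ^ (m j.+1).+1 <= 2 ^ M.+1 by rewrite leq_exp2l.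
      lia.
    have S2 : y < 2 ^ M by [].
    have S3 : 0 < u \/ 0 < y.
      case: (ltnP j 2) => Hj2; first (right; apply: Hy1; lia).
      left; have := Hu2 Hj2; lia.
    rewrite Qsym (HA S1 S2 S3).
    case: (ltnP j 2) => Hj2.
    * have := Hu0 ltac:(lia). split; [lia|].
      case=> [//|[[H1 _]|[H1 _]]]; lia.
    * have [Hu Hu3] := Hu2 Hj2.
      split.
      -- move=> [_ [[Hy0 Hev]|[Hy0 Hlt]]].
         ++ right; right. have := (proj1 Hu3) Hev. lia.
         ++ right; left. have := Hc2' ltac:(lia). lia.
      -- case=> [//|[[H1 [H2 [H3 [H4 H5]]]]|[H1 [H2 [H3 [H4 H5]]]]]].
         ++ split => //. right. have := Hc2 H3. lia.
         ++ split => //. left. have := (proj2 Hu3) H3. lia.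
Qed.


Lemma QB_iff N a b : QB N (a, b) <-> [/\ b <= a, 1 <= b, a + b = N & Q a b].
Proof.
rewrite /QB !cmin_cc /Q /absdiff.
split.
- case/and4P => H1 H2 /eqP H3 /eqP H4; split => //. rewrite H3. lia.
- case=> H1 H2 H3 H4; apply/and4P; split => //; apply/eqP; [done|]. rewrite -H3. lia.
Qed.

Lemma QB2 t a b : 0 < t -> QB (2 * t) (a, b) <->
  (exists a' b', [/\ QB t (a', b'), a = 2 * a' & b = 2 * b']) \/ (a = t /\ b = t).
Proof.
move=> Ht; rewrite QB_iff; split.
- case=> H1 H2 H3 H4.
  case: (half_cases a) => a' [Ea|Ea]; case: (half_cases b) => b' [Eb|Eb]; subst a b; try lia.
  + left; exists a', b'; split => //. rewrite QB_iff. rewrite QE in H4; try lia. split => //; lia.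
  + right. have := QOO a' b' H4. lia.
- case=> [[a' [b' [H -> ->]]]|[-> ->]].
  + have [H1 H2 H3 H4] := iffLR (QB_iff _ _ _) H.
    split; try lia. rewrite QE //; lia.
  + split; try lia. exact: Q_refl.
Qed.

Lemma QBk n0 a b : 0 < n0 -> forall k, QB (2 ^ k * n0) (a, b) <->
  (exists a' b', [/\ QB n0 (a', b'), a = 2 ^ k * a' & b = 2 ^ k * b']) \/
  (1 <= k /\ a = 2 ^ k.-1 * n0 /\ b = 2 ^ k.-1 * n0).
Proof.
move=> Hn0 k; elim: k a b => [|k IH] a b.
- rewrite expn0 mul1n; split.
  + move=> H; left; exists a, b; split => //; lia.
  + case=> [[a' [b' [H -> ->]]]|]; [by rewrite !mul1n | lia].
- rewrite expnS -mulnA QB2; last by rewrite muln_gt0 expn_gt0 Hn0.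
  split.
  + case=> [[a' [b' [H -> ->]]]|[-> ->]]; last by right; split.
    case/IH: H => [[a'' [b'' [H -> ->]]]|[Hk [-> ->]]].
    * left; exists a'', b''; split => //; by rewrite mulnA.
    * right; split => //=. case: k Hk IH => // k _ _. by rewrite /= expnS -mulnA.
  + case=> [[a' [b' [H -> ->]]]|[_ [-> ->]]]; last first.
    * right; by [].
    * left; exists (2 ^ k * a'), (2 ^ k * b'); split; try by rewrite mulnA.
      apply/IH; left; exists a', b'; split => //.
Qed.

Lemma Sp_pos m j : 2 <= j -> 1 <= Spart m j.
Proof. move=> Hj; have := Sp_mono m 1 j; rewrite Sp1; lia. Qed.

Lemma lvl2_facts l m n0 : hypM l m -> n0 = \sum_(1 <= i < l.+1) 2 ^ m i ->
  forall i, 2 <= i -> i <= l - 1 -> m i.+1 + 1 < m i ->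
  [/\ n0 - (Spart m i + 2 ^ m i) = Spart m i + Rs l m i.+1,
      Spart m i + Rs l m i.+1 < Spart m i.+1,
      1 <= Rs l m i.+1,
      Rs l m i.+1 < 2 ^ m i &
      n0 = 2 * Spart m i + 2 ^ m i + Rs l m i.+1].
Proof.
move=> H Hn0 i Hi1 Hi2 Hc.
have E1 := n0_split l m n0 H Hn0 i ltac:(lia).
have E2 := RsS l m i ltac:(lia).
have E3 := SpS m i ltac:(lia).
have /andP [B1 B2] := Rs_bounds l m H i.+1 ltac:(lia).
have B3 : 2 ^ (m i.+1).+1 <= 2 ^ (m i - 1) by rewrite leq_exp2l; lia.
have B4 : 0 < 2 ^ m i.+1 by rewrite expn_gt0.
have Hp : 0 < m i by apply: (m_pos l m H); lia.
have B5 : 2 ^ m i = 2 * 2 ^ (m i - 1) by rewrite -expnS subn1 prednK.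
split; lia.
Qed.

Lemma PartIn_valid l m n0 : hypM l m -> 2 <= l -> n0 = \sum_(1 <= i < l.+1) 2 ^ m i ->
  forall a b, PartIn l m n0 1 a b -> [/\ 1 <= b, 2 * b <= n0 & a + b = n0].
Proof.
move=> H Hl Hn0 a b.
have [Hm Hml] := H.
case=> [[-> ->]|[[i [_ [H1 [H2 [H3 [-> ->]]]]]]|[i [_ [H1 [H2 [H3 [-> ->]]]]]]]].
- have E1 := n0_split l m n0 H Hn0 l ltac:(lia).
  have E2 : Rs l m l = 1 by rewrite RsS // Rs_end Hml.
  have := Sp_pos m l Hl. split; lia.
- have [F1 F2 F3 F4 F5] := lvl2_facts l m n0 H Hn0 i H1 H2 H3.
  have := Sp_pos m i H1. split; lia.
- have E1 := n0_split l m n0 H Hn0 i ltac:(lia).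
  have /andP [B1 B2] := Rs_bounds l m H i ltac:(lia).
  have := Sp_pos m i H1. split; lia.
Qed.

Lemma QB_odd l m n0 : hypM l m -> 2 <= l -> n0 = \sum_(1 <= i < l.+1) 2 ^ m i ->
  forall a b, QB n0 (a, b) <-> PartIn l m n0 1 a b.
Proof.
move=> H Hl Hn0 a b.
have E1 := n0_split l m n0 H Hn0 1 ltac:(lia).
rewrite Sp1 in E1.
have C := claim l m n0 H Hl Hn0 (l - 1) 1 erefl ltac:(lia).
split.
- case/QB_iff => H1 H2 H3 H4.
  have := C b ltac:(lia) ltac:(lia). rewrite Sp1 !add0n.
  have -> : Rs l m 1 - b = a by lia.
  by move=> [/(_ H4)].
- move=> HP; have [H1 H2 H3] := PartIn_valid l m n0 H Hl Hn0 a b HP.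
  have := C b ltac:(lia) ltac:(lia). rewrite Sp1 !add0n.
  have -> : Rs l m 1 - b = a by lia.
  move=> [_ /(_ HP) HQ]. apply/QB_iff; split => //; lia.
Qed.


Lemma mem_fiota (T : eqType) (f : nat -> T) (P : pred nat) l x :
  x \in [seq f j | j <- iota 2 (l - 2) & P j] <-> exists j, [/\ 2 <= j, j <= l - 1, P j & x = f j].
Proof.
split.
- case/mapP => j; rewrite mem_filter mem_iota => /andP [Pj /andP [H1 H2]] ->.
  exists j; split => //; lia.
- case=> j [H1 H2 Pj ->]; apply/mapP; exists j => //.
  rewrite mem_filter mem_iota Pj /=; apply/andP; split => //; lia.
Qed.

Lemma peq (a b c d : nat) : (a, b) = (c, d) <-> a = c /\ b = d.
Proof. by split => [[-> ->]|[-> ->]]. Qed.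

Lemma mem_list n k l m n0 : hypM l m -> 2 <= l -> n0 = \sum_(1 <= i < l.+1) 2 ^ m i ->
  n = 2 ^ k * n0 -> forall a b,
  (a, b) \in QB_list n k l m <->
  (exists a' b', [/\ PartIn l m n0 1 a' b', a = 2 ^ k * a' & b = 2 ^ k * b']) \/
  (1 <= k /\ a = n %/ 2 /\ b = n %/ 2).
Proof.
move=> H Hl Hn0 En a b.
have EB : forall X, n - 2 ^ k * X = 2 ^ k * (n0 - X) by move=> X; rewrite En mulnBr.
rewrite /QB_list in_cons !mem_cat.
split.
- case/orP => [/eqP /peq [-> ->]|/orP [/mem_fiota [j [H1 H2 H3 /peq [-> ->]]]|/orP [/mem_fiota [j [H1 H2 H3 /peq [-> ->]]]|H4]]].
  + left; exists (Spart m l + 1), (Spart m l); split => //. by left.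
  + left; exists (Spart m j + 2 ^ m j), (n0 - (Spart m j + 2 ^ m j)); split => //.
    * right; left; exists j; split => //; first lia. rewrite /lvl2; repeat split => //.
  + left; exists (n0 - Spart m j), (Spart m j); split => //.
    * right; right; exists j; split => //; first lia. rewrite /lvl3; repeat split => //.
  + right; move: H4; case: ifP => Hk; last by rewrite in_nil.
    by rewrite inE => /eqP /peq [-> ->].
- case=> [[a' [b' [HP -> ->]]]|[Hk [-> ->]]].
  + apply/orP; case: HP => [[-> ->]|[[i [_ [H1 [H2 [H3 [-> ->]]]]]]|[i [_ [H1 [H2 [H3 [-> ->]]]]]]]].
    * by left.
    * right; apply/orP; left; apply/mem_fiota; exists i; split => //.
      by rewrite EB.
    * right; apply/orP; right; apply/orP; left; apply/mem_fiota; exists i; split => //.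
      by rewrite EB.
  + apply/orP; right; apply/orP; right; apply/orP; right.
    by rewrite Hk inE.
Qed.

Lemma list_uniq n k l m n0 : hypM l m -> 2 <= l -> n0 = \sum_(1 <= i < l.+1) 2 ^ m i ->
  n = 2 ^ k * n0 -> uniq (QB_list n k l m).
Proof.
move=> H Hl Hn0 En.
have HK : 0 < 2 ^ k by rewrite expn_gt0.
have canc : forall A B, 2 ^ k * A = 2 ^ k * B -> A = B.
  by move=> A B /eqP; rewrite eqn_pmul2l // => /eqP.
have EB : forall X, n - 2 ^ k * X = 2 ^ k * (n0 - X) by move=> X; rewrite En mulnBr.
have L2F := lvl2_facts l m n0 H Hn0.
have L3F : forall j, 2 <= j -> j <= l - 1 -> n0 = 2 * Spart m j + Rs l m j /\ 1 <= Rs l m j.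
  move=> j H1 H2; have /andP [B1 _] := Rs_bounds l m H j ltac:(lia).
  split; first by apply: (n0_split l m n0 H Hn0); lia.
  have := expn_gt0 2 (m j); lia.
have SM := Sp_mono m.
rewrite /QB_list cons_uniq !cat_uniq !mem_cat !negb_or.
repeat (apply/andP; split).
-
  apply/negP => /mem_fiota [j [H1 H2 H3 /peq [Ea Eb]]].
  rewrite EB in Eb; have Eb' := canc _ _ Eb.
  have [F1 F2 F3 F4 F5] := L2F j H1 H2 H3.
  have := SM j.+1 l ltac:(lia) ltac:(lia). lia.
-
  apply/negP => /mem_fiota [j [H1 H2 H3 /peq [Ea Eb]]].
  have Eb' := canc _ _ Eb.
  have := SM j l ltac:(lia) ltac:(lia). lia.
-
  case: ifP => Hk; last by rewrite in_nil.
  rewrite inE; apply/negP => /eqP /peq [Ea Eb].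
  rewrite -Eb in Ea; have := canc _ _ Ea; lia.
-
  rewrite map_inj_in_uniq ?filter_uniq ?iota_uniq //.
  move=> j1 j2; rewrite !mem_filter !mem_iota => /andP [P1 R1] /andP [P2 R2] /peq [_ Eb].
  rewrite !EB in Eb; have Eb' := canc _ _ Eb.
  have [F1 F2 F3 F4 F5] := L2F j1 ltac:(lia) ltac:(lia) P1.
  have [G1 G2 G3 G4 G5] := L2F j2 ltac:(lia) ltac:(lia) P2.
  case: (ltngtP j1 j2) => // Hj.
  + have := SM j1.+1 j2 ltac:(lia) ltac:(lia). lia.
  + have := SM j2.+1 j1 ltac:(lia) ltac:(lia). lia.
-
  apply/hasPn => [[a b]]; rewrite mem_cat => /orP [Hp|Hp]; apply/negP => /mem_fiota [j [H1 H2 H3 /peq [Ea Eb]]].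
  + move/mem_fiota: Hp => [j' [H1' H2' H3' /peq [Ea' Eb']]].
    rewrite Eb' EB in Eb; have Eb2 := canc _ _ Eb.
    have [F1 F2 F3 F4 F5] := L2F j H1 H2 H3.
    case: (ltnP j j') => Hj.
    * have := SM j.+1 j' ltac:(lia) ltac:(lia). lia.
    * have := SM j' j ltac:(lia) ltac:(lia). lia.
  + move: Hp; case: ifP => Hk; last by rewrite in_nil.
    rewrite inE => /eqP /peq [Ea' Eb'].
    rewrite Ea' Eb' EB in Ea Eb. rewrite Ea in Eb. have Eb2 := canc _ _ Eb.
    have [F1 F2 F3 F4 F5] := L2F j H1 H2 H3. lia.
-
  rewrite map_inj_in_uniq ?filter_uniq ?iota_uniq //.
  move=> j1 j2; rewrite !mem_filter !mem_iota => /andP [P1 R1] /andP [P2 R2] /peq [_ Eb].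
  have Eb' := canc _ _ Eb.
  case: (ltngtP j1 j2) => // Hj.
  + have := SM j1 j2 ltac:(lia) ltac:(lia). lia.
  + have := SM j2 j1 ltac:(lia) ltac:(lia). lia.
-
  apply/hasPn => [[a b]]; case: ifP => Hk; last by rewrite in_nil.
  rewrite inE => /eqP /peq [-> ->]; apply/negP => /mem_fiota [j [H1 H2 H3 /peq [Ea Eb]]].
  rewrite Eb EB in Ea. have Ea2 := canc _ _ Ea.
  have [F1 F2] := L3F j H1 H2. lia.
- by case: ifP.
Qed.


Theorem proposition3 (n k l : nat) (m : nat -> nat) :
  2 <= n ->
  k = logn 2 n ->
  1 <= l ->
  (forall i j, 1 <= i -> i < j -> j <= l -> m j < m i) ->
  m l = 0 ->
  n %/ 2 ^ k = \sum_(1 <= i < l.+1) 2 ^ m i ->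
  (l = 1 -> forall p : nat * nat, QB n p <-> p = (n %/ 2, n %/ 2)) /\
  (1 < l -> (forall p : nat * nat, QB n p <-> p \in QB_list n k l m)
            /\ uniq (QB_list n k l m)).
Proof.
move=> Hn Hk Hl Hm Hml Hsum.
have H : hypM l m by split.
have En : n = 2 ^ k * (n %/ 2 ^ k) by rewrite mulnC divnK // Hk pfactor_dvdnn.
move: Hsum En; set n0 := n %/ 2 ^ k => Hsum En.
have Hn0 : 0 < n0 by case: (posnP n0) => // E; rewrite E muln0 in En; lia.
have Hhalf : 1 <= k -> n %/ 2 = 2 ^ k.-1 * n0.
  move=> Hk1; have E2 : 2 ^ k = 2 * 2 ^ k.-1 by rewrite -expnS prednK.
  rewrite E2 in En; lia.
split.
- move=> El [a b]; subst l.
  have E1 : n0 = 1 by rewrite Hsum big_nat1 Hml.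
  rewrite {1}En QBk //. split.
  + case=> [[a' [b' [HQ _ _]]]|[Hk1 [-> ->]]].
    * move/QB_iff: HQ => [? ? ? ?]; lia.
    * by rewrite Hhalf.
  + move=> /peq [Ea Eb]; right.
    have Hk1 : 1 <= k by case: (posnP k) En => // ->; rewrite E1 expn0; lia.
    by rewrite Ea Eb Hhalf.
- move=> Hl2; split; last exact: (list_uniq n k l m n0 H Hl2 Hsum En).
  move=> [a b]; rewrite (mem_list n k l m n0 H Hl2 Hsum En) {1}En QBk //.
  split.
  + case=> [[a' [b' [HQ -> ->]]]|[Hk1 [-> ->]]].
    * left; exists a', b'; split => //; by apply/(QB_odd l m n0 H Hl2 Hsum).
    * right; by rewrite Hhalf.
  + case=> [[a' [b' [HQ -> ->]]]|[Hk1 [-> ->]]].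
    * left; exists a', b'; split => //; by apply/(QB_odd l m n0 H Hl2 Hsum).
    * right; by rewrite Hhalf.
Qed.
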